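(* Let $0\le\alpha<1$. The radius of starlikeness of order $\alpha$ of the class of analytic functions $f(z)=z+\sum_{n\ge2}a_nz^n$ on $\mathbb{D}$ with $|a_n|\le n$ for all $n\ge2$ is the real root in $(0,1)$ of the equation \[2(1-\alpha)(1-r)^3=1-\alpha+(1+\alpha)r.\] In particular, the radius of starlikeness of this class is \[r_0(0)=1+\frac{1}{6^{2/3}}\left((\sqrt{330}-18)^{1/3}-(\sqrt{330}+18)^{1/3}\right)\approx0.164878,\] and the radius of starlikeness of order $1/2$, which equals the radius of parabolic starlikeness of the class, is \[r_0(1/2)=1+\frac{1}{\sqrt2}\left((3-2\sqrt2)^{1/3}-(3+2\sqrt2)^{1/3}\right)\approx0.120385.\] These results are sharp.
   Context: $\mathbb{D}=\{z\in\mathbb{C}:|z|<1\}$. For a class $\mathcal{F}$ of analytic functions on $\mathbb{D}$ normalized by $f(0)=0$, $f'(0)=1$, and $0\le\alpha<1$, the radius of starlikeness of order $\alpha$ of $\mathcal{F}$ is the supremum of $r\in(0,1]$ such that every $f\in\mathcal{F}$ satisfies $f(z)\ne0$ for $0<|z|<r$ and $\operatorname{Re}\big(zf'(z)/f(z)\big)>\alpha$ for $|z|<r$ (the quotient being $1$ at $z=0$); the radius of starlikeness means the case $\alpha=0$. The radius of parabolic starlikeness of $\mathcal{F}$ is the supremum of $r\in(0,1]$ such that every $f\in\mathcal{F}$ satisfies $\operatorname{Re}\big(zf'(z)/f(z)\big)>\left|zf'(z)/f(z)-1\right|$ for $|z|<r$. *)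

(* Defs.v *)
From Stdlib Require Import Reals.
From Coquelicot Require Import Coquelicot.
Open Scope R_scope.

Definition classF (f : C -> C) : Prop :=
  exists a : nat -> C,
    a 0%nat = 0%C /\ a 1%nat = 1%C /\
    (forall n : nat, (2 <= n)%nat -> Cmod (a n) <= INR n) /\
    (forall z : C, Cmod z < 1 ->
       @is_series C_AbsRing C_NormedModule (fun n => (a n * Cpow z n)%C) (f z)).

Definition cderiv_at (f : C -> C) (z d : C) : Prop :=
  @is_derive C_AbsRing C_NormedModule f z d.

(* f is starlike of order alpha in |z| < r.  At z = 0 the quotient z f'/f is
   1 > alpha by convention, so only z <> 0 is constrained. *)
Definition starlike_order_in (alpha r : R) (f : C -> C) : Prop :=
  (forall z : C, 0 < Cmod z < r -> f z <> 0%C) /\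
  (forall z : C, 0 < Cmod z < r ->
     exists d : C, cderiv_at f z d /\ alpha < Re (z * d / f z)%C).

Definition starlike_radius_set (F : (C -> C) -> Prop) (alpha : R) (r : R) : Prop :=
  0 < r <= 1 /\ forall f, F f -> starlike_order_in alpha r f.

Definition is_radius_starlike (F : (C -> C) -> Prop) (alpha rho : R) : Prop :=
  is_lub (starlike_radius_set F alpha) rho.

(* parabolic starlikeness in |z| < r: Re q > |q - 1| with q = z f'/f
   (q = 1 at z = 0, where the inequality 1 > 0 holds). *)
Definition parabolic_in (r : R) (f : C -> C) : Prop :=
  forall z : C, 0 < Cmod z < r ->
    f z <> 0%C /\
    exists d : C, cderiv_at f z d /\
      Cmod ((z * d / f z) - 1)%C < Re (z * d / f z)%C.

Definition parabolic_radius_set (F : (C -> C) -> Prop) (r : R) : Prop :=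
  0 < r <= 1 /\ forall f, F f -> parabolic_in r f.

Definition is_radius_parabolic (F : (C -> C) -> Prop) (rho : R) : Prop :=
  is_lub (parabolic_radius_set F) rho.

(* Main.v *)
Require Import Defs.
From Stdlib Require Import Reals Lra Lia Psatz ClassicalEpsilon.
From Coquelicot Require Import Coquelicot.
Open Scope R_scope.

Lemma lim_ratio_pow (k : nat) :
  is_lim_seq (fun n => ((INR (S (S n))) / INR (S n)) ^ k) 1.
Proof.
  assert (H1 : is_lim_seq (fun n => 1 + / INR (S n)) 1).
  { assert (E : Finite 1 = Finite (1 + 0)) by (f_equal; ring). rewrite E.
    apply is_lim_seq_plus'. apply is_lim_seq_const.
    assert (H := is_lim_seq_inv _ _ is_lim_seq_INR).
    simpl in H. specialize (H ltac:(discriminate)).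
    apply (is_lim_seq_incr_1 (fun n => / INR n) 0). exact H. }
  induction k.
  - apply is_lim_seq_const.
  - assert (E : Finite 1 = Finite (1 * 1)) by (f_equal; ring). rewrite E.
    apply is_lim_seq_ext with (fun n => (1 + / INR (S n)) * ((INR (S (S n))) / INR (S n)) ^ k).
    + intros n. rewrite <- tech_pow_Rmult. f_equal.
      rewrite (S_INR (S n)). field. apply not_0_INR. discriminate.
    + apply is_lim_seq_mult'; auto.
Qed.

Lemma ex_series_Snpow (k : nat) (r : R) : 0 < r < 1 ->
  ex_series (fun n => INR (S n) ^ k * r ^ n).
Proof.
  intros Hr.
  { apply ex_series_ext with (fun n => Rabs (INR (S n) ^ k * r ^ n)).
    { intros n. apply Rabs_pos_eq. apply Rmult_le_pos; apply pow_le; try lra.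
      apply pos_INR. }
    apply ex_series_DAlembert with r. lra.
    { intros n. apply Rmult_integral_contrapositive; split; apply pow_nonzero.
      apply not_0_INR; discriminate. lra. }
    apply is_lim_seq_ext with (fun n => ((INR (S (S n))) / INR (S n)) ^ k * r).
    { intros n. rewrite Rabs_pos_eq.
      - rewrite <- tech_pow_Rmult. unfold Rdiv. rewrite Rpow_mult_distr, pow_inv. field. split; apply pow_nonzero; [lra|].
        apply not_0_INR; discriminate.
      - apply Rmult_le_pos. apply Rmult_le_pos; apply pow_le; try lra. apply pos_INR.
        apply Rlt_le, Rinv_0_lt_compat. apply Rmult_lt_0_compat; apply pow_lt; try lra.
        apply lt_0_INR; lia. }
    assert (E : Finite r = Rbar_mult 1 r) by (simpl; f_equal; ring). rewrite E.
    apply is_lim_seq_scal_r. apply lim_ratio_pow. }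
Qed.

Lemma ex_series_npow (k : nat) (r : R) : 0 < r < 1 ->
  ex_series (fun n => INR n ^ k * r ^ n).
Proof.
  intros Hr. assert (HS := ex_series_Snpow k r Hr).
  apply (@ex_series_le R_AbsRing R_CompleteNormedModule) with (fun n => INR (S n) ^ k * r ^ n); auto.
  intros n. change norm with Rabs. rewrite Rabs_pos_eq.
  apply Rmult_le_compat_r. apply pow_le; lra. apply pow_incr. split. apply pos_INR.
  rewrite S_INR; lra.
  apply Rmult_le_pos; apply pow_le; try lra. apply pos_INR.
Qed.

Lemma is_series_R_unique (a : nat -> R) l1 l2 : is_series a l1 -> is_series a l2 -> l1 = l2.
Proof. intros H1 H2. rewrite <- (is_series_unique _ _ H1). now apply is_series_unique. Qed.

Lemma shift_eq (s g : nat -> R) (l lg c1 c2 : R) :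
  s 0%nat = 0 -> is_series s l -> is_series g lg ->
  (forall n, s (S n) = c1 * s n + c2 * g n) -> l = c1 * l + c2 * lg.
Proof.
  intros H0 Hs Hg Hrec.
  assert (H1 : is_series (fun n => s (S n)) l).
  { apply is_series_incr_1. rewrite H0. change (plus l 0) with (l + 0). rewrite Rplus_0_r. exact Hs. }
  assert (H2 : is_series (fun n => s (S n)) (c1 * l + c2 * lg)).
  { apply is_series_ext with (fun n => plus (scal c1 (s n)) (scal c2 (g n))).
    { intros n. rewrite Hrec. reflexivity. }
    change (c1 * l + c2 * lg) with (@plus R_NormedModule (@scal R_AbsRing R_NormedModule c1 l) (@scal R_AbsRing R_NormedModule c2 lg)).
    apply (is_series_plus (K:=R_AbsRing) (V:=R_NormedModule)); apply (is_series_scal (K:=R_AbsRing) (V:=R_NormedModule)); auto. }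
  exact (is_series_R_unique _ _ _ H1 H2).
Qed.

Lemma sumA (r : R) : 0 < r < 1 -> is_series (fun n => INR n * r ^ n) (r / (1 - r) ^ 2).
Proof.
  intros Hr. destruct (ex_series_npow 1 r Hr) as [l Hl].
  assert (Hl' : is_series (fun n => INR n * r ^ n) l).
  { apply is_series_ext with (2 := Hl). intros n. simpl. ring. }
  assert (Hg := is_series_geom r ltac:(rewrite Rabs_pos_eq; lra)).
  assert (E := shift_eq (fun n => INR n * r ^ n) (fun n => r ^ n) _ _ r r (ltac:(simpl; ring)) Hl' Hg).
  assert (E' : l = r * l + r * / (1 - r)).
  { apply E. intros n. rewrite S_INR. rewrite <- tech_pow_Rmult. ring. }
  replace (r / (1 - r) ^ 2) with l; auto.
  assert (E2 : l * (1 - r) = r * / (1 - r)) by lra.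
  apply Rmult_eq_reg_r with (1 - r). 2: lra. rewrite E2. field. lra.
Qed.

Lemma sumB (r : R) : 0 < r < 1 ->
  is_series (fun n => INR n ^ 2 * r ^ n) (r * (1 + r) / (1 - r) ^ 3).
Proof.
  intros Hr. destruct (ex_series_npow 2 r Hr) as [l Hl].
  assert (HA := sumA r Hr).
  assert (Hg := is_series_geom r ltac:(rewrite Rabs_pos_eq; lra)).
  assert (Hg2 : is_series (fun n => 2 * (INR n * r ^ n) + r ^ n) (2 * (r / (1 - r) ^ 2) + / (1 - r))).
  { apply (is_series_plus (K:=R_AbsRing) (V:=R_NormedModule) (fun n => 2 * (INR n * r ^ n))).
    apply (is_series_scal (K:=R_AbsRing) (V:=R_NormedModule) 2). exact HA. exact Hg. }
  assert (E := shift_eq (fun n => INR n ^ 2 * r ^ n) (fun n => 2 * (INR n * r ^ n) + r ^ n) _ _ r r (ltac:(simpl; ring)) Hl Hg2).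
  assert (E' : l = r * l + r * (2 * (r / (1 - r) ^ 2) + / (1 - r))).
  { apply E. intros n. cbv beta. rewrite S_INR. cbn [pow]. ring. }
  replace (r * (1 + r) / (1 - r) ^ 3) with l; auto.
  assert (E2 : l * (1 - r) = r * (2 * (r / (1 - r) ^ 2) + / (1 - r))) by lra.
  apply Rmult_eq_reg_r with (1 - r). 2: lra. rewrite E2. field. lra.
Qed.

Notation CS := (@is_series C_AbsRing C_NormedModule).
Notation RS := (@is_series R_AbsRing R_NormedModule).
Lemma CS_scal c u l : CS u l -> CS (fun n => c * u n)%C (c * l)%C.
Proof. exact (is_series_scal (K:=C_AbsRing) (V:=C_NormedModule) c u l). Qed.
Lemma CS_plus u v lu lv : CS u lu -> CS v lv -> CS (fun n => u n + v n)%C (lu + lv)%C.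
Proof. exact (is_series_plus (K:=C_AbsRing) (V:=C_NormedModule) u v lu lv). Qed.
Lemma CS_minus u v lu lv : CS u lu -> CS v lv -> CS (fun n => u n - v n)%C (lu - lv)%C.
Proof. exact (is_series_minus (K:=C_AbsRing) (V:=C_NormedModule) u v lu lv). Qed.
Lemma CS_ext u v l : (forall n, u n = v n) -> CS u l -> CS v l.
Proof. apply is_series_ext. Qed.
Lemma CS_incr u l : CS u (l + u 0%nat)%C -> CS (fun n => u (S n)) l.
Proof. exact (is_series_incr_1 (K:=C_AbsRing) (V:=C_NormedModule) u l). Qed.
Lemma CS_decr u l : CS (fun n => u (S n)) (l - u 0%nat)%C -> CS u l.
Proof. exact (is_series_decr_1 (K:=C_AbsRing) (V:=C_NormedModule) u l). Qed.

Lemma Cseries_norm_le (u : nat -> C) (v : nat -> R) (U : C) (V : R) :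
  CS u U -> RS v V -> (forall n, Cmod (u n) <= v n) -> Cmod U <= V.
Proof.
  intros HU HV Hle.
  assert (Hp : forall N, Cmod (sum_n u N) <= sum_n v N).
  { intros N. unfold sum_n. eapply Rle_trans.
    apply (norm_sum_n_m (K:=C_AbsRing) (V:=C_NormedModule)).
    apply sum_n_m_le. intros k. apply Hle. }
  assert (H1 : is_lim_seq (fun N => Cmod (sum_n u N)) (Cmod U)).
  { unfold is_lim_seq. simpl.
    apply (filterlim_comp _ _ _ (sum_n u) (@norm C_AbsRing C_NormedModule) eventually (locally U)).
    exact HU. exact (filterlim_norm (K:=C_AbsRing) (V:=C_NormedModule) U). }
  assert (H2 : is_lim_seq (sum_n v) V) by exact HV.
  assert (H := is_lim_seq_le _ _ _ _ Hp H1 H2). simpl in H. exact H.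
Qed.

Lemma Cseries_unique (u : nat -> C) (l1 l2 : C) : CS u l1 -> CS u l2 -> l1 = l2.
Proof.
  intros H1 H2. exact (filterlim_locally_unique (F:=eventually) (sum_n u) l1 l2 H1 H2).
Qed.

Lemma RtoC_cont (l : R) : filterlim RtoC (locally l) (locally (RtoC l)).
Proof.
  intros P [eps HP]. exists eps. intros y Hy. apply HP. split. exact Hy. apply ball_center.
Qed.

Lemma Cseries_RtoC (u : nat -> R) (l : R) : RS u l -> CS (fun n => RtoC (u n)) (RtoC l).
Proof.
  intros H.
  assert (E : forall N, sum_n (fun n => RtoC (u n)) N = RtoC (sum_n u N)).
  { induction N. rewrite !sum_O. reflexivity.
    rewrite !sum_Sn, IHN. change (plus (RtoC (sum_n u N)) (RtoC (u (S N))) = RtoC (plus (sum_n u N) (u (S N)))).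
    change (RtoC (sum_n u N) + RtoC (u (S N)) = RtoC (sum_n u N + u (S N)))%C.
    now rewrite RtoC_plus. }
  unfold is_series.
  apply filterlim_ext with (fun N => RtoC (sum_n u N)). { intros N. now rewrite E. }
  apply filterlim_comp with (locally l). exact H. apply RtoC_cont.
Qed.

Lemma E_rec (y z : C) (n : nat) :
  (y ^ S (S n) - z ^ S (S n) - INR (S (S n)) * z ^ S n * (y - z))%C =
  (y * (y ^ S n - z ^ S n - INR (S n) * z ^ n * (y - z)) + INR (S n) * z ^ n * ((y - z) * (y - z)))%C.
Proof.
  rewrite (S_INR (S n)), RtoC_plus. rewrite !Cpow_S. ring.
Qed.

Lemma E0 (y z : C) : (y ^ 1 - z ^ 1 - INR 1 * z ^ 0 * (y - z))%C = 0%C.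
Proof. simpl. ring. Qed.

Lemma Ebound (y z : C) (p : R) : 0 < p -> Cmod y <= p -> Cmod z <= p -> forall n,
  Cmod (y ^ S n - z ^ S n - INR (S n) * z ^ n * (y - z))%C * p
  <= INR (S n) ^ 2 * p ^ n * Cmod (y - z) ^ 2.
Proof.
  intros Hp Hy Hz n. set (c := Cmod (y - z)).
  assert (Hc : 0 <= c) by apply Cmod_ge_0.
  induction n.
  - rewrite E0, Cmod_0. simpl. nra.
  - rewrite E_rec. set (e := Cmod (y ^ S n - z ^ S n - INR (S n) * z ^ n * (y - z))%C) in *.
    assert (He : 0 <= e) by apply Cmod_ge_0.
    assert (Hzn : Cmod z ^ n <= p ^ n) by (apply pow_incr; split; [apply Cmod_ge_0|lra]).
    assert (Hpn : 0 <= p ^ n) by (apply pow_le; lra).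
    assert (HN : 0 <= INR (S n)) by apply pos_INR.
    assert (T : Cmod (y * (y ^ S n - z ^ S n - INR (S n) * z ^ n * (y - z)) + INR (S n) * z ^ n * ((y - z) * (y - z)))%C
               <= p * e + INR (S n) * p ^ n * (c * c)).
    { eapply Rle_trans. apply Cmod_triangle. rewrite !Cmod_mult, Cmod_pow, Cmod_R, Rabs_pos_eq by auto.
      fold c. fold e. apply Rplus_le_compat.
      apply Rmult_le_compat_r; auto.
      apply Rmult_le_compat_r. nra. apply Rmult_le_compat_l; auto. }
    rewrite (S_INR (S n)). cbn [pow]. rewrite S_INR in *.
    assert (Hn : 0 <= INR n) by apply pos_INR.
    cbn [pow] in IHn.
    apply Rle_trans with ((p * e + (INR n + 1) * p ^ n * (c * c)) * p).
    apply Rmult_le_compat_r; lra.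
    assert (X : p * (e * p) <= p * ((INR n + 1) * ((INR n + 1) * 1) * p ^ n * (c * (c * 1)))) by
      (apply Rmult_le_compat_l; lra).
    assert (Y : 0 <= p ^ n * (c * c) * p) by (apply Rmult_le_pos; [apply Rmult_le_pos|]; nra).
    set (Q := p ^ n * (c * c) * p) in *.
    replace ((p * e + (INR n + 1) * p ^ n * (c * c)) * p) with (p * (e * p) + (INR n + 1) * Q) by (unfold Q; ring).
    replace ((INR n + 1 + 1) * ((INR n + 1 + 1) * 1) * (p * p ^ n) * (c * (c * 1))) with ((INR n + 2) ^ 2 * Q) by (unfold Q; ring).
    replace (p * ((INR n + 1) * ((INR n + 1) * 1) * p ^ n * (c * (c * 1)))) with ((INR n + 1) ^ 2 * Q) in X by (unfold Q; ring).
    nra.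
Qed.

Lemma coef0 (a : nat -> C) : (forall n, Cmod (a n) <= INR n) -> a 0%nat = 0%C.
Proof. intros H. apply Cmod_eq_0. specialize (H 0%nat). simpl in H. pose proof (Cmod_ge_0 (a 0%nat)). lra. Qed.

Lemma shift_aux (z x y : C) (n : nat) : (z * (x * y * z ^ n))%C = (x * y * z ^ S n)%C.
Proof. rewrite Cpow_S. ring. Qed.

Lemma series_deriv (a : nat -> C) (f : C -> C) :
  (forall n, Cmod (a n) <= INR n) ->
  (forall z, Cmod z < 1 -> CS (fun n => a n * z ^ n)%C (f z)) ->
  forall z, Cmod z < 1 -> exists d, cderiv_at f z d /\ CS (fun n => INR n * a n * z ^ n)%C (z * d)%C.
Proof.
  intros Ha Hf z Hz.
  assert (Ha0 := coef0 a Ha).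
  set (p := (Cmod z + 1) / 2).
  assert (Hz0 := Cmod_ge_0 z).
  assert (Hp : 0 < p < 1) by (unfold p; lra).
  assert (Hzp : Cmod z < p) by (unfold p; lra).
  set (t := fun n => (INR (S n) * a (S n) * z ^ n)%C).
  assert (Ht : ex_series (K:=C_AbsRing) (V:=C_NormedModule) t).
  { apply (@ex_series_le C_AbsRing C_CompleteNormedModule) with (fun n => INR (S n) ^ 2 * p ^ n).
    - intros n. change norm with Cmod. unfold t. rewrite !Cmod_mult, Cmod_pow, Cmod_R, Rabs_pos_eq by apply pos_INR.
      replace (INR (S n) ^ 2 * p ^ n) with (INR (S n) * (INR (S n) * p ^ n)) by ring.
      rewrite Rmult_assoc. apply Rmult_le_compat_l. apply pos_INR.
      apply Rmult_le_compat. apply Cmod_ge_0. apply pow_le, Cmod_ge_0. apply Ha.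
      apply pow_incr. split; [apply Cmod_ge_0|lra].
    - apply ex_series_Snpow. exact Hp. }
  destruct Ht as [d Hd].
  exists d. split.
  2: {
    apply CS_decr.
    apply CS_ext with (fun n => z * t n)%C.
    { intros n. unfold t. exact (shift_aux z (INR (S n)) (a (S n)) n). }
    replace (z * d - INR 0 * a 0%nat * z ^ 0)%C with (z * d)%C.
    apply CS_scal. exact Hd.
    rewrite Ha0. ring. }
  destruct (ex_series_Snpow 3 p Hp) as [s3 Hs3].
  set (K := Rabs s3 / p).
  assert (HK : 0 <= K) by (unfold K; apply Rmult_le_pos; [apply Rabs_pos|apply Rlt_le, Rinv_0_lt_compat; lra]).
  assert (Main : forall y, Cmod (y - z) < p - Cmod z ->
            Cmod (f y - f z - (y - z) * d)%C <= K * Cmod (y - z) ^ 2).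
  { intros y Hy.
    assert (Hyp : Cmod y <= p).
    { replace y with (z + (y - z))%C by ring. eapply Rle_trans. apply Cmod_triangle. lra. }
    set (c := Cmod (y - z)).
    assert (Sy : CS (fun n => a (S n) * y ^ S n)%C (f y)).
    { apply (CS_incr (fun n => a n * y ^ n)%C). rewrite Ha0. replace (f y + 0 * y ^ 0)%C with (f y) by ring. apply Hf. lra. }
    assert (Sz : CS (fun n => a (S n) * z ^ S n)%C (f z)).
    { apply (CS_incr (fun n => a n * z ^ n)%C). rewrite Ha0. replace (f z + 0 * z ^ 0)%C with (f z) by ring. apply Hf. lra. }
    assert (S1 := CS_minus _ _ _ _ (CS_minus _ _ _ _ Sy Sz) (CS_scal (y - z)%C _ _ Hd)).
    cbv beta in S1.
    assert (Hv : RS (fun n => INR (S n) ^ 3 * p ^ n * (c ^ 2 / p)) (s3 * (c ^ 2 / p))).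
    { apply is_series_scal_r. exact Hs3. }
    eapply Rle_trans. apply (Cseries_norm_le _ _ _ _ S1 Hv).
    - intros n. unfold t.
      replace (a (S n) * y ^ S n - a (S n) * z ^ S n - (y - z) * (INR (S n) * a (S n) * z ^ n))%C
        with (a (S n) * (y ^ S n - z ^ S n - INR (S n) * z ^ n * (y - z)))%C by ring.
      rewrite Cmod_mult.
      assert (EB := Ebound y z p (proj1 Hp) Hyp (Rlt_le _ _ Hzp) n). fold c in EB.
      assert (HaS : Cmod (a (S n)) <= INR (S n)) by apply Ha.
      set (e := Cmod (y ^ S n - z ^ S n - INR (S n) * z ^ n * (y - z))%C) in *.
      assert (He : 0 <= e) by apply Cmod_ge_0.
      assert (e <= INR (S n) ^ 2 * p ^ n * c ^ 2 / p).
      { apply Rmult_le_reg_r with p. lra. unfold Rdiv. rewrite Rmult_assoc, Rinv_l, Rmult_1_r by lra. exact EB. }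
      eapply Rle_trans. apply Rmult_le_compat_r. exact He. exact HaS.
      eapply Rle_trans. apply Rmult_le_compat_l. apply pos_INR. exact H.
      right. unfold Rdiv. ring.
    - unfold K. unfold Rdiv. replace (s3 * (c ^ 2 * / p)) with (s3 * / p * c ^ 2) by ring.
      apply Rmult_le_compat_r. apply pow2_ge_0. apply Rmult_le_compat_r.
      apply Rlt_le, Rinv_0_lt_compat; lra. apply Rle_abs. }
  unfold cderiv_at, is_derive. split. apply is_linear_scal_l.
  intros x Hx. apply (is_filter_lim_locally_unique (K:=C_AbsRing) (V:=AbsRing_NormedModule C_AbsRing)) in Hx. subst x.
  intros eps. apply (locally_norm_le_locally (K:=C_AbsRing) (V:=AbsRing_NormedModule C_AbsRing)).
  assert (Hd0 : 0 < Rmin (p - Cmod z) (eps / (K + 1))).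
  { apply Rmin_glb_lt. lra. apply Rdiv_lt_0_compat. apply cond_pos. lra. }
  exists (mkposreal _ Hd0). intros y Hy.
  change (Cmod (y - z) < Rmin (p - Cmod z) (eps / (K + 1))) in Hy.
  change (Cmod (f y - f z - (y - z) * d)%C <= eps * Cmod (y - z)).
  assert (Hy1 : Cmod (y - z) < p - Cmod z) by (eapply Rlt_le_trans; [exact Hy|apply Rmin_l]).
  assert (Hy2 : Cmod (y - z) <= eps / (K + 1)) by (left; eapply Rlt_le_trans; [exact Hy|apply Rmin_r]).
  eapply Rle_trans. apply Main. exact Hy1.
  assert (Hc := Cmod_ge_0 (y - z)).
  assert (K * Cmod (y - z) <= eps).
  { apply Rle_trans with (K * (eps / (K + 1))). apply Rmult_le_compat_l; auto.
    unfold Rdiv. apply Rle_trans with ((K + 1) * (eps * / (K + 1))).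
    apply Rmult_le_compat_r. apply Rlt_le, Rdiv_lt_0_compat. apply cond_pos. lra. lra.
    right. field. lra. }
  simpl. nra.
Qed.

Lemma RS_incr u l : RS u (l + u 0%nat) -> RS (fun n => u (S n)) l.
Proof. exact (is_series_incr_1 (K:=R_AbsRing) (V:=R_NormedModule) u l). Qed.
Lemma RS_decr u l : RS (fun n => u (S n)) (l - u 0%nat) -> RS u l.
Proof. exact (is_series_decr_1 (K:=R_AbsRing) (V:=R_NormedModule) u l). Qed.

Lemma coef_all (a : nat -> C) : a 0%nat = 0%C -> a 1%nat = 1%C ->
  (forall n, (2 <= n)%nat -> Cmod (a n) <= INR n) -> forall n, Cmod (a n) <= INR n.
Proof.
  intros H0 H1 H n. destruct n as [|[|n]].
  - rewrite H0, Cmod_0. simpl; lra.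
  - rewrite H1, Cmod_1. simpl; lra.
  - apply H. lia.
Qed.

Lemma czero (x w : C) : Cmod (x * 0 * w - 0 * w)%C = 0.
Proof. replace (x * 0 * w - 0 * w)%C with (RtoC 0) by ring. apply Cmod_0. Qed.

Lemma key_bounds (a : nat -> C) (f : C -> C) (z : C) :
  a 0%nat = 0%C -> a 1%nat = 1%C -> (forall n, Cmod (a n) <= INR n) ->
  (forall z, Cmod z < 1 -> CS (fun n => a n * z ^ n)%C (f z)) ->
  0 < Cmod z < 1 ->
  exists d, cderiv_at f z d /\
    Cmod (f z - z)%C <= Cmod z / (1 - Cmod z) ^ 2 - Cmod z /\
    Cmod (z * d - f z)%C <= Cmod z * (1 + Cmod z) / (1 - Cmod z) ^ 3 - Cmod z / (1 - Cmod z) ^ 2.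
Proof.
  intros H0 H1 Ha Hf Hz.
  set (r := Cmod z) in *.
  destruct (series_deriv a f Ha Hf z (proj2 Hz)) as [d [Hd HG]].
  exists d. split. exact Hd.
  assert (HF := Hf z (proj2 Hz)).
  assert (HA := sumA r Hz). assert (HB := sumB r Hz).
  split.
  - assert (S1 : CS (fun n => a (S n) * z ^ S n)%C (f z)).
    { apply (CS_incr (fun n => a n * z ^ n)%C). rewrite H0. replace (f z + 0 * z ^ 0)%C with (f z) by ring. exact HF. }
    assert (S2 : CS (fun n => a (S (S n)) * z ^ S (S n))%C (f z - z)%C).
    { apply (CS_incr (fun n => a (S n) * z ^ S n)%C). rewrite H1. replace (f z - z + 1 * z ^ 1)%C with (f z) by ring. exact S1. }
    assert (R1 : RS (fun n => INR (S n) * r ^ S n) (r / (1 - r) ^ 2)).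
    { apply (RS_incr (fun n => INR n * r ^ n)). replace (r / (1 - r) ^ 2 + INR 0 * r ^ 0) with (r / (1 - r) ^ 2) by (simpl; ring). exact HA. }
    assert (R2 : RS (fun n => INR (S (S n)) * r ^ S (S n)) (r / (1 - r) ^ 2 - r)).
    { apply (RS_incr (fun n => INR (S n) * r ^ S n)). replace (r / (1 - r) ^ 2 - r + INR 1 * r ^ 1) with (r / (1 - r) ^ 2) by (simpl; ring). exact R1. }
    apply (Cseries_norm_le _ _ _ _ S2 R2).
    intros n. rewrite Cmod_mult, Cmod_pow. fold r. apply Rmult_le_compat_r. apply pow_le, Cmod_ge_0. apply Ha.
  - assert (S3 := CS_minus _ _ _ _ HG HF). cbv beta in S3.
    assert (R3 : RS (fun n => INR n ^ 2 * r ^ n - INR n * r ^ n)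
                    (r * (1 + r) / (1 - r) ^ 3 - r / (1 - r) ^ 2)).
    { exact (is_series_minus (K:=R_AbsRing) (V:=R_NormedModule) _ _ _ _ HB HA). }
    apply (Cseries_norm_le _ _ _ _ S3 R3).
    intros n. destruct n as [|n].
    + rewrite H0, czero. simpl. lra.
    + replace (INR (S n) * a (S n) * z ^ S n - a (S n) * z ^ S n)%C with (RtoC (INR n) * a (S n) * z ^ S n)%C
        by (rewrite S_INR, RtoC_plus; ring).
      rewrite !Cmod_mult, Cmod_pow, Cmod_R, Rabs_pos_eq by apply pos_INR. fold r.
      assert (HaS := Ha (S n)). rewrite S_INR in *.
      assert (Hn := pos_INR n). assert (Hr := pow_le r (S n) (Cmod_ge_0 z)).
      assert (Hc := Cmod_ge_0 (a (S n))).
      replace ((INR n + 1) ^ 2 * r ^ S n - (INR n + 1) * r ^ S n) with (INR n * (INR n + 1) * r ^ S n) by ring.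
      apply Rmult_le_compat_r. exact Hr. apply Rmult_le_compat_l; auto.
Qed.

Lemma alg_bound (z F G : C) (rho A B al : R) :
  Cmod z = rho -> Cmod (F - z)%C <= A - rho -> Cmod (G - F)%C <= B - A ->
  B - A < (1 - al) * (2 * rho - A) -> al < 1 ->
  F <> RtoC 0 /\ Cmod (G / F - 1)%C < 1 - al.
Proof.
  intros Hz H1 H2 H3 Hal.
  assert (HF : Cmod F >= 2 * rho - A).
  { assert (T := Cmod_triangle F (z - F)%C). replace (F + (z - F))%C with z in T by ring.
    replace (z - F)%C with (- (F - z))%C in T by ring. rewrite Cmod_opp in T. lra. }
  assert (HBA : 0 <= B - A) by (pose proof (Cmod_ge_0 (G - F)%C); lra).
  assert (Hpos : 0 < 2 * rho - A) by nra.
  assert (Fnz : F <> RtoC 0).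
  { intros E. rewrite E, Cmod_0 in HF. lra. }
  split. exact Fnz.
  replace (G / F - 1)%C with ((G - F) / F)%C by (field; exact Fnz).
  rewrite Cmod_div by exact Fnz.
  apply Rle_lt_trans with ((B - A) / (2 * rho - A)).
  - unfold Rdiv. apply Rmult_le_compat; auto. apply Cmod_ge_0.
    apply Rlt_le, Rinv_0_lt_compat. apply Cmod_gt_0. exact Fnz.
    apply Rinv_le_contravar; lra.
  - apply Rmult_lt_reg_r with (2 * rho - A). exact Hpos.
    unfold Rdiv. rewrite Rmult_assoc, Rinv_l, Rmult_1_r by lra. lra.
Qed.

Lemma re_ge (q : C) : 1 - Cmod (q - 1)%C <= Re q.
Proof.
  assert (H := re_le_Cmod (q - 1)%C).
  assert (E : Re (q - 1)%C = Re q - 1).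
  { unfold Cminus. rewrite re_plus, re_opp, re_RtoC. ring. }
  rewrite E in H. pose proof (Rle_abs (- (Re q - 1))) as H2. rewrite Rabs_Ropp in H2. lra.
Qed.

Definition cubic (al r : R) := 2 * (1 - al) * (1 - r) ^ 3 = 1 - al + (1 + al) * r.

Lemma num_ineq (al r rho : R) : 0 <= al < 1 -> 0 < rho < r -> r < 1 -> cubic al r ->
  2 * rho < (1 - al) * (2 * (1 - rho) ^ 3 - (1 - rho)).
Proof.
  unfold cubic. intros Hal Hrho Hr Hc.
  set (Q := (1 - rho) ^ 2 + (1 - rho) * (1 - r) + (1 - r) ^ 2).
  assert (HQ : 0 <= Q) by (unfold Q; nra).
  assert (E : (1 - al) * (2 * (1 - rho) ^ 3 - (1 - rho)) - 2 * rho =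
              (r - rho) * ((1 - al) * (2 * Q - 1) + 2) + ((1 - al) * (2 * (1 - r) ^ 3 - (1 - r)) - 2 * r))
    by (unfold Q; ring).
  assert (E2 : (1 - al) * (2 * (1 - r) ^ 3 - (1 - r)) - 2 * r = 0) by nra.
  assert (P : 0 < (r - rho) * ((1 - al) * (2 * Q - 1) + 2)).
  { apply Rmult_lt_0_compat. lra. nra. }
  lra.
Qed.

Lemma num_BA (al r rho : R) : 0 <= al < 1 -> 0 < rho < r -> r < 1 -> cubic al r ->
  rho * (1 + rho) / (1 - rho) ^ 3 - rho / (1 - rho) ^ 2 <
  (1 - al) * (2 * rho - rho / (1 - rho) ^ 2).
Proof.
  intros Hal Hrho Hr Hc.
  assert (H := num_ineq al r rho Hal Hrho Hr Hc).
  assert (Hu : 0 < 1 - rho) by lra.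
  assert (E : (1 - al) * (2 * rho - rho / (1 - rho) ^ 2) - (rho * (1 + rho) / (1 - rho) ^ 3 - rho / (1 - rho) ^ 2)
              = rho * ((1 - al) * (2 * (1 - rho) ^ 3 - (1 - rho)) - 2 * rho) / (1 - rho) ^ 3)
    by (field; lra).
  assert (0 < rho * ((1 - al) * (2 * (1 - rho) ^ 3 - (1 - rho)) - 2 * rho) / (1 - rho) ^ 3).
  { apply Rdiv_lt_0_compat. apply Rmult_lt_0_compat; lra. apply pow_lt; lra. }
  lra.
Qed.

Lemma lower (al r : R) (f : C -> C) (z : C) : 0 <= al < 1 -> 0 < r < 1 -> cubic al r ->
  classF f -> 0 < Cmod z < r ->
  f z <> RtoC 0 /\ exists d, cderiv_at f z d /\ Cmod (z * d / f z - 1)%C < 1 - al.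
Proof.
  intros Hal Hr Hc [a [H0 [H1 [Ha Hf]]]] Hz.
  assert (Ha' := coef_all a H0 H1 Ha).
  destruct (key_bounds a f z H0 H1 Ha' Hf ltac:(lra)) as [d [Hd [B1 B2]]].
  assert (Hn := num_BA al r (Cmod z) Hal ltac:(lra) ltac:(lra) Hc).
  destruct (alg_bound z (f z) (z * d)%C (Cmod z) _ _ al eq_refl B1 B2 Hn ltac:(lra)) as [Fnz Hq].
  split. exact Fnz. exists d. split; assumption.
Qed.

Lemma ex_Cseries (a : nat -> C) (z : C) : (forall n, Cmod (a n) <= INR n) -> Cmod z < 1 ->
  exists l, CS (fun n => a n * z ^ n)%C l.
Proof.
  intros Ha Hz. set (p := (Cmod z + 1) / 2). assert (Hz0 := Cmod_ge_0 z).
  assert (Hp : 0 < p < 1) by (unfold p; lra).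
  assert (H : ex_series (K:=C_AbsRing) (V:=C_NormedModule) (fun n => a n * z ^ n)%C).
  { apply (@ex_series_le C_AbsRing C_CompleteNormedModule) with (fun n => INR n ^ 1 * p ^ n).
    - intros n. change norm with Cmod. rewrite Cmod_mult, Cmod_pow, pow_1.
      apply Rmult_le_compat. apply Cmod_ge_0. apply pow_le, Cmod_ge_0. apply Ha.
      apply pow_incr. unfold p; lra.
    - apply ex_series_npow. exact Hp. }
  exact H.
Qed.

Definition er (n : nat) : R := match n with 0%nat => 0 | 1%nat => 1 | S (S _) => - INR n end.

Definition fe (z : C) : C :=
  epsilon (inhabits (RtoC 0)) (fun l => CS (fun n => RtoC (er n) * z ^ n)%C l).

Lemma er_bound n : Cmod (RtoC (er n)) <= INR n.
Proof.
  rewrite Cmod_R. destruct n as [|[|n]]; unfold er.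
  - rewrite Rabs_R0. simpl; lra.
  - rewrite Rabs_R1. simpl; lra.
  - rewrite Rabs_Ropp, Rabs_pos_eq. lra. apply pos_INR.
Qed.

Lemma fe_series z : Cmod z < 1 -> CS (fun n => RtoC (er n) * z ^ n)%C (fe z).
Proof.
  intros Hz. unfold fe. apply epsilon_spec. apply ex_Cseries. apply er_bound. exact Hz.
Qed.

Lemma fe_classF : classF fe.
Proof.
  exists (fun n => RtoC (er n)). split. reflexivity. split. reflexivity. split.
  - intros n _. apply er_bound.
  - exact fe_series.
Qed.

Lemma shiftA (r : R) : 0 < r < 1 ->
  RS (fun n => INR (S (S n)) * r ^ S (S n)) (r / (1 - r) ^ 2 - r).
Proof.
  intros Hr. assert (HA := sumA r Hr).
  assert (R1 : RS (fun n => INR (S n) * r ^ S n) (r / (1 - r) ^ 2)).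
  { apply (RS_incr (fun n => INR n * r ^ n)). replace (r / (1 - r) ^ 2 + INR 0 * r ^ 0) with (r / (1 - r) ^ 2) by (simpl; ring). exact HA. }
  apply (RS_incr (fun n => INR (S n) * r ^ S n)). replace (r / (1 - r) ^ 2 - r + INR 1 * r ^ 1) with (r / (1 - r) ^ 2) by (simpl; ring). exact R1.
Qed.

Lemma shiftB (r : R) : 0 < r < 1 ->
  RS (fun n => INR (S (S n)) ^ 2 * r ^ S (S n)) (r * (1 + r) / (1 - r) ^ 3 - r).
Proof.
  intros Hr. assert (HA := sumB r Hr).
  assert (R1 : RS (fun n => INR (S n) ^ 2 * r ^ S n) (r * (1 + r) / (1 - r) ^ 3)).
  { apply (RS_incr (fun n => INR n ^ 2 * r ^ n)). replace (r * (1 + r) / (1 - r) ^ 3 + INR 0 ^ 2 * r ^ 0) with (r * (1 + r) / (1 - r) ^ 3) by (simpl; ring). exact HA. }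
  apply (RS_incr (fun n => INR (S n) ^ 2 * r ^ S n)). replace (r * (1 + r) / (1 - r) ^ 3 - r + INR 1 ^ 2 * r ^ 1) with (r * (1 + r) / (1 - r) ^ 3) by (simpl; ring). exact R1.
Qed.

Lemma er_sumF (r : R) : 0 < r < 1 -> RS (fun n => er n * r ^ n) (2 * r - r / (1 - r) ^ 2).
Proof.
  intros Hr. apply RS_decr. apply (RS_decr (fun n => er (S n) * r ^ S n)).
  apply is_series_ext with (fun n => opp (INR (S (S n)) * r ^ S (S n))).
  { intros n. change (- (INR (S (S n)) * r ^ S (S n)) = er (S (S n)) * r ^ S (S n)).
    unfold er. ring. }
  replace (2 * r - r / (1 - r) ^ 2 - er 0 * r ^ 0 - er 1 * r ^ 1) with (opp (r / (1 - r) ^ 2 - r)).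
  apply (is_series_opp (K:=R_AbsRing) (V:=R_NormedModule)). apply shiftA. exact Hr.
  change (- (r / (1 - r) ^ 2 - r) = 2 * r - r / (1 - r) ^ 2 - er 0 * r ^ 0 - er 1 * r ^ 1).
  unfold er. simpl. ring.
Qed.

Lemma er_sumG (r : R) : 0 < r < 1 -> RS (fun n => INR n * er n * r ^ n) (2 * r - r * (1 + r) / (1 - r) ^ 3).
Proof.
  intros Hr. apply RS_decr. apply (RS_decr (fun n => INR (S n) * er (S n) * r ^ S n)).
  apply is_series_ext with (fun n => opp (INR (S (S n)) ^ 2 * r ^ S (S n))).
  { intros n. change (- (INR (S (S n)) ^ 2 * r ^ S (S n)) = INR (S (S n)) * er (S (S n)) * r ^ S (S n)).
    unfold er. ring. }
  replace (2 * r - r * (1 + r) / (1 - r) ^ 3 - INR 0 * er 0 * r ^ 0 - INR 1 * er 1 * r ^ 1) with (opp (r * (1 + r) / (1 - r) ^ 3 - r)).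
  apply (is_series_opp (K:=R_AbsRing) (V:=R_NormedModule)). apply shiftB. exact Hr.
  change (- (r * (1 + r) / (1 - r) ^ 3 - r) = 2 * r - r * (1 + r) / (1 - r) ^ 3 - INR 0 * er 0 * r ^ 0 - INR 1 * er 1 * r ^ 1).
  unfold er. simpl. ring.
Qed.

Lemma fe_vals (r : R) : 0 < r < 1 ->
  fe (RtoC r) = RtoC (2 * r - r / (1 - r) ^ 2) /\
  forall d, cderiv_at fe (RtoC r) d -> (RtoC r * d)%C = RtoC (2 * r - r * (1 + r) / (1 - r) ^ 3).
Proof.
  intros Hr.
  assert (Hz : Cmod (RtoC r) < 1) by (rewrite Cmod_R, Rabs_pos_eq; lra).
  split.
  - apply (Cseries_unique (fun n => RtoC (er n) * RtoC r ^ n)%C). apply fe_series. exact Hz.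
    apply CS_ext with (fun n => RtoC (er n * r ^ n)).
    { intros n. rewrite RtoC_mult, RtoC_pow. reflexivity. }
    apply Cseries_RtoC. apply er_sumF. exact Hr.
  - intros d Hd.
    assert (Ha : forall n, Cmod (RtoC (er n)) <= INR n) by apply er_bound.
    destruct (series_deriv _ fe Ha fe_series (RtoC r) Hz) as [d0 [Hd0 HG]].
    assert (E : d = d0).
    { rewrite <- (is_C_derive_unique _ _ _ Hd). apply is_C_derive_unique. exact Hd0. }
    subst d.
    apply (Cseries_unique (fun n => INR n * RtoC (er n) * RtoC r ^ n)%C). exact HG.
    apply CS_ext with (fun n => RtoC (INR n * er n * r ^ n)).
    { intros n. rewrite !RtoC_mult, RtoC_pow. reflexivity. }
    apply Cseries_RtoC. apply er_sumG. exact Hr.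
Qed.

Lemma fe_q (al r : R) : 0 <= al < 1 -> 0 < r < 1 -> cubic al r ->
  forall d, cderiv_at fe (RtoC r) d -> (RtoC r * d / fe (RtoC r))%C = RtoC al.
Proof.
  intros Hal Hr Hc d Hd.
  destruct (fe_vals r Hr) as [E1 E2]. rewrite E1, (E2 d Hd).
  unfold cubic in Hc.
  set (X := 2 * (1 - r) ^ 3 - (1 - r)).
  assert (HX : (1 - al) * X = 2 * r) by (unfold X; nra).
  assert (HXp : 0 < X).
  { apply Rmult_lt_reg_l with (1 - al). lra. rewrite Rmult_0_r, HX. lra. }
  assert (Hu : 0 < 1 - r) by lra.
  assert (EA : 2 * r - r / (1 - r) ^ 2 = r * X / (1 - r) ^ 3) by (unfold X; field; lra).
  assert (EB : 2 * r - r * (1 + r) / (1 - r) ^ 3 = r * (al * X) / (1 - r) ^ 3).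
  { replace (al * X) with (X - 2 * r) by lra. unfold X. field. lra. }
  assert (HA0 : r * X / (1 - r) ^ 3 <> 0).
  { apply Rgt_not_eq. apply Rdiv_lt_0_compat. nra. apply pow_lt; lra. }
  rewrite EA, EB. rewrite <- RtoC_div by exact HA0. f_equal. field. split. lra. split.
  apply Rgt_not_eq; exact HXp. lra.
Qed.

Theorem radius_starlike (al r : R) : 0 <= al < 1 -> 0 < r < 1 -> cubic al r ->
  is_radius_starlike classF al r.
Proof.
  intros Hal Hr Hc. split.
  - intros x [Hx1 Hx2]. destruct (Rle_or_lt x r) as [H|H]; auto. exfalso.
    destruct (Hx2 fe fe_classF) as [_ Hs].
    assert (Hz : 0 < Cmod (RtoC r) < x) by (rewrite Cmod_R, Rabs_pos_eq; lra).
    destruct (Hs (RtoC r) Hz) as [d [Hd Hre]].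
    rewrite (fe_q al r Hal Hr Hc d Hd), re_RtoC in Hre. lra.
  - intros b Hb. apply Hb. split. lra. intros f Hf. split.
    + intros z Hz. exact (proj1 (lower al r f z Hal Hr Hc Hf Hz)).
    + intros z Hz. destruct (lower al r f z Hal Hr Hc Hf Hz) as [_ [d [Hd Hq]]].
      exists d. split. exact Hd. pose proof (re_ge (z * d / f z)%C). lra.
Qed.

Theorem radius_parab (r : R) : 0 < r < 1 -> cubic (1 / 2) r -> is_radius_parabolic classF r.
Proof.
  intros Hr Hc. assert (Hal : 0 <= 1 / 2 < 1) by lra. split.
  - intros x [Hx1 Hx2]. destruct (Rle_or_lt x r) as [H|H]; auto. exfalso.
    assert (Hz : 0 < Cmod (RtoC r) < x) by (rewrite Cmod_R, Rabs_pos_eq; lra).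
    destruct (Hx2 fe fe_classF (RtoC r) Hz) as [_ [d [Hd Hre]]].
    rewrite (fe_q (1 / 2) r Hal Hr Hc d Hd), re_RtoC in Hre.
    replace (RtoC (1 / 2) - 1)%C with (RtoC (1 / 2 - 1)) in Hre by (rewrite RtoC_minus; reflexivity).
    rewrite Cmod_R in Hre. rewrite Rabs_left in Hre by lra. lra.
  - intros b Hb. apply Hb. split. lra. intros f Hf z Hz.
    destruct (lower (1 / 2) r f z Hal Hr Hc Hf Hz) as [Fnz [d [Hd Hq]]].
    split. exact Fnz. exists d. split. exact Hd. pose proof (re_ge (z * d / f z)%C). lra.
Qed.

Lemma Rpower_pos x y : 0 < Rpower x y.
Proof. unfold Rpower. apply exp_pos. Qed.

Lemma cube x : 0 < x -> Rpower x (1 / 3) ^ 3 = x.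
Proof.
  intros Hx. rewrite <- Rpower_pow by apply Rpower_pos. rewrite Rpower_mult.
  replace (1 / 3 * INR 3) with 1 by (simpl; field). apply Rpower_1. exact Hx.
Qed.

Lemma root0 : let r := 1 + / Rpower 6 (2 / 3) *
         (Rpower (sqrt 330 - 18) (1 / 3) - Rpower (sqrt 330 + 18) (1 / 3)) in
  0 < r < 1 /\ cubic 0 r.
Proof.
  intros r.
  assert (Hs : sqrt 330 * sqrt 330 = 330) by (apply sqrt_sqrt; lra).
  assert (Hs0 : 0 <= sqrt 330) by apply sqrt_pos.
  assert (Hs1 : 18 < sqrt 330) by nra.
  set (a := Rpower (sqrt 330 - 18) (1 / 3)).
  set (b := Rpower (sqrt 330 + 18) (1 / 3)).
  assert (Ha3 : a ^ 3 = sqrt 330 - 18) by (apply cube; lra).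
  assert (Hb3 : b ^ 3 = sqrt 330 + 18) by (apply cube; lra).
  assert (Ha : 0 < a) by apply Rpower_pos.
  assert (Hab : a < b) by (apply Rlt_Rpower_l; lra).
  assert (Hm : a * b = Rpower 6 (1 / 3)).
  { unfold a, b. rewrite Rpower_mult_distr by lra. f_equal. nra. }
  assert (Hc : Rpower 6 (2 / 3) * (a * b) = 6).
  { rewrite Hm, <- Rpower_plus. replace (2 / 3 + 1 / 3) with 1 by field. apply Rpower_1. lra. }
  assert (Hci : / Rpower 6 (2 / 3) = a * b / 6).
  { assert (0 < Rpower 6 (2/3)) by apply Rpower_pos. field_simplify_eq. 2: lra. lra. }
  assert (Hm3 : (a * b) ^ 3 = 6) by (rewrite Rpow_mult_distr, Ha3, Hb3; nra).
  set (s := (b - a) * (a * b) / 6).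
  assert (Er : r = 1 - s). { unfold r, s. change (Rpower (sqrt 330 - 18) (1 / 3)) with a. change (Rpower (sqrt 330 + 18) (1 / 3)) with b. rewrite Hci. field. }
  assert (Hu3 : (b - a) ^ 3 = 36 - 3 * (a * b) * (b - a)) by (transitivity (b ^ 3 - a ^ 3 - 3 * (a * b) * (b - a)); [ring| rewrite Ha3, Hb3; ring]).
  assert (Hs3 : 2 * s ^ 3 = 2 - s).
  { unfold s. replace (2 * ((b - a) * (a * b) / 6) ^ 3) with ((b - a) ^ 3 * (a * b) ^ 3 / 108) by field.
    rewrite Hu3, Hm3. field. }
  assert (Hspos : 0 < s) by (unfold s; apply Rdiv_lt_0_compat; [apply Rmult_lt_0_compat; nra|lra]).
  assert (Hs1' : s < 1) by nra.
  split. lra. unfold cubic. rewrite Er. replace (1 - (1 - s)) with s by ring. nra.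
Qed.

Lemma root12 : let r := 1 + / sqrt 2 *
         (Rpower (3 - 2 * sqrt 2) (1 / 3) - Rpower (3 + 2 * sqrt 2) (1 / 3)) in
  0 < r < 1 /\ cubic (1 / 2) r.
Proof.
  intros r.
  assert (Ht : sqrt 2 * sqrt 2 = 2) by (apply sqrt_sqrt; lra).
  assert (Ht0 : 0 <= sqrt 2) by apply sqrt_pos.
  assert (Ht1 : sqrt 2 < 3 / 2) by nra.
  assert (Ht2 : 0 < sqrt 2) by nra.
  set (a := Rpower (3 - 2 * sqrt 2) (1 / 3)).
  set (b := Rpower (3 + 2 * sqrt 2) (1 / 3)).
  assert (Ha3 : a ^ 3 = 3 - 2 * sqrt 2) by (apply cube; lra).
  assert (Hb3 : b ^ 3 = 3 + 2 * sqrt 2) by (apply cube; lra).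
  assert (Ha : 0 < a) by apply Rpower_pos.
  assert (Hab : a < b) by (apply Rlt_Rpower_l; lra).
  assert (Hm : a * b = 1).
  { unfold a, b. rewrite Rpower_mult_distr by lra.
    replace ((3 - 2 * sqrt 2) * (3 + 2 * sqrt 2)) with 1 by nra. unfold Rpower. rewrite ln_1.
    rewrite Rmult_0_r. apply exp_0. }
  set (s := (b - a) * sqrt 2 / 2).
  assert (Er : r = 1 - s). { unfold r, s. change (Rpower (3 - 2 * sqrt 2) (1 / 3)) with a. change (Rpower (3 + 2 * sqrt 2) (1 / 3)) with b. assert (Hi : / sqrt 2 = sqrt 2 / 2) by (field_simplify_eq; lra). rewrite Hi. field. }
  assert (Hu3 : (b - a) ^ 3 = 4 * sqrt 2 - 3 * (b - a)).
  { transitivity (b ^ 3 - a ^ 3 - 3 * (a * b) * (b - a)). ring. rewrite Ha3, Hb3, Hm. ring. }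
  assert (Hs3 : s ^ 3 = 2 - 3 / 2 * s).
  { unfold s. replace (((b - a) * sqrt 2 / 2) ^ 3) with ((b - a) ^ 3 * (sqrt 2 * sqrt 2) * sqrt 2 / 8) by field.
    rewrite Hu3, Ht. replace ((4 * sqrt 2 - 3 * (b - a)) * 2 * sqrt 2 / 8) with ((4 * (sqrt 2 * sqrt 2) - 3 * (b - a) * sqrt 2) / 4) by field.
    rewrite Ht. field. }
  assert (Hspos : 0 < s) by (unfold s; apply Rdiv_lt_0_compat; [apply Rmult_lt_0_compat; lra|lra]).
  assert (Hs1' : s < 1) by nra.
  split. lra. unfold cubic. rewrite Er. replace (1 - (1 - s)) with s by ring. nra.
Qed.

Lemma root_exists (al : R) : 0 <= al < 1 -> exists r, 0 < r < 1 /\ cubic al r.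
Proof.
  intros Hal.
  set (g := fun x => (1 - al) + (1 + al) * x - 2 * (1 - al) * (1 - x) ^ 3).
  assert (Hg : continuity g).
  { unfold g. intros x. apply derivable_continuous_pt. reg. }
  destruct (IVT g 0 1 Hg ltac:(lra)) as [x [Hx Hgx]].
  - unfold g. simpl. lra.
  - unfold g. simpl. lra.
  - unfold g in Hgx. exists x. unfold cubic.
    assert (x <> 0). { intros E. subst x. simpl in Hgx. lra. }
    assert (x <> 1). { intros E. subst x. simpl in Hgx. lra. }
    split. lra. lra.
Qed.

Theorem corollary2p2 :
  (forall alpha : R, 0 <= alpha < 1 ->
     (exists r : R, 0 < r < 1 /\
        2 * (1 - alpha) * (1 - r) ^ 3 = 1 - alpha + (1 + alpha) * r) /\
     (forall r : R, 0 < r < 1 ->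
        2 * (1 - alpha) * (1 - r) ^ 3 = 1 - alpha + (1 + alpha) * r ->
        is_radius_starlike classF alpha r)) /\
  is_radius_starlike classF 0
    (1 + / Rpower 6 (2 / 3) *
         (Rpower (sqrt 330 - 18) (1 / 3) - Rpower (sqrt 330 + 18) (1 / 3))) /\
  is_radius_starlike classF (1 / 2)
    (1 + / sqrt 2 *
         (Rpower (3 - 2 * sqrt 2) (1 / 3) - Rpower (3 + 2 * sqrt 2) (1 / 3))) /\
  is_radius_parabolic classF
    (1 + / sqrt 2 *
         (Rpower (3 - 2 * sqrt 2) (1 / 3) - Rpower (3 + 2 * sqrt 2) (1 / 3))).
Proof.
  split; [|split; [|split]].
  - intros al Hal. split.
    + exact (root_exists al Hal).
    + intros r Hr Hc. apply radius_starlike; auto.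
  - destruct root0 as [Hr Hc]. apply radius_starlike; auto. lra.
  - destruct root12 as [Hr Hc]. apply radius_starlike; auto. lra.
  - destruct root12 as [Hr Hc]. apply radius_parab; auto.
Qed.
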